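(* Let $K$ be a field and let $I_A\subset K[x_1,\ldots,x_n]$ be a toric ideal of height $r\ge 3$ such that $\mathrm{bar}(I_A)\le 2r-2$. Then $I_A$ is radical splittable.
   Context: $A=\{{\bf a}_1,\ldots,{\bf a}_n\}\subset\mathbb{Z}^m$ is a vector configuration with $\ker_{\mathbb{Z}}(A)\cap\mathbb{N}^n=\{{\bf 0}\}$, where $\ker_{\mathbb{Z}}(A)=\{{\bf u}\in\mathbb{Z}^n\mid\sum u_i{\bf a}_i={\bf 0}\}$; $I_A$ is the kernel of $K[x_1,\ldots,x_n]\to K[t_1^{\pm1},\ldots,t_m^{\pm1}]$, $x_i\mapsto{\bf t}^{{\bf a}_i}$, and its height equals $\dim_{\mathbb{Q}}\ker_{\mathbb{Q}}(A)$. The binomial arithmetical rank $\mathrm{bar}(I_A)$ is the smallest $t$ such that there exist binomials $B_1,\ldots,B_t\in I_A$ with $I_A=\mathrm{rad}(B_1,\ldots,B_t)$. $I_A$ is radical splittable if there exist toric ideals $I_{A_1},I_{A_2}\subset K[x_1,\ldots,x_n]$ with $I_A=\mathrm{rad}(I_{A_1}+I_{A_2})$ and $I_{A_i}\ne I_A$ for $i=1,2$. *)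

(* Defs.v *)
From HB Require Import structures.
From mathcomp Require Import all_boot all_order all_algebra.
From mathcomp Require Import mpoly.
Set Implicit Arguments. Unset Strict Implicit. Unset Printing Implicit Defensive.
Import Order.TTheory GRing.Theory Num.Theory.
Local Open Scope ring_scope.

(* A vector configuration A = {a_1,...,a_n} in Z^m is an m x n integer
   matrix whose i-th column is a_i. *)

Definition Amul (m n : nat) (A : 'M[int]_(m, n)) (u : 'I_n -> nat)
  : {ffun 'I_m -> int} :=
  [ffun j => \sum_(i < n) A j i * (u i)%:Z].

Definition pointed_conf (m n : nat) (A : 'M[int]_(m, n)) : Prop :=
  forall u : 'I_n -> nat,
    (forall j : 'I_m, \sum_(i < n) A j i * (u i)%:Z = 0) ->
    forall i, u i = 0%N.

(* The image of f under x_i |-> t^{a_i}, as a finitely supported function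
   Z^m -> K (a Laurent polynomial in t_1..t_m): the coefficient of t^b. *)
Definition toric_image (K : fieldType) (m n : nat) (A : 'M[int]_(m, n))
  (f : {mpoly K[n]}) (b : {ffun 'I_m -> int}) : K :=
  \sum_(c <- msupp f | Amul A (fun i => c i) == b) f@_c.

Definition toric_ideal (K : fieldType) (m n : nat) (A : 'M[int]_(m, n))
  (f : {mpoly K[n]}) : Prop :=
  forall b : {ffun 'I_m -> int}, toric_image A f b = 0.

(* height of I_A = dim_Q ker_Q(A) = n - rank_Q(A) *)
Definition toric_height (m n : nat) (A : 'M[int]_(m, n)) : nat :=
  (n - \rank (map_mx (intr : int -> rat) A))%N.

Definition is_binomial (K : fieldType) (n : nat) (p : {mpoly K[n]}) : Prop :=
  exists u v : 'X_{1..n}, p = 'X_[u] - 'X_[v].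

Definition ideal_gen (K : fieldType) (n t : nat) (B : 'I_t -> {mpoly K[n]})
  (f : {mpoly K[n]}) : Prop :=
  exists g : 'I_t -> {mpoly K[n]}, f = \sum_(i < t) g i * B i.

Definition ideal_sum (K : fieldType) (n : nat)
  (I J : {mpoly K[n]} -> Prop) (f : {mpoly K[n]}) : Prop :=
  exists g h, I g /\ J h /\ f = g + h.

Definition radical (K : fieldType) (n : nat) (I : {mpoly K[n]} -> Prop)
  (f : {mpoly K[n]}) : Prop :=
  exists k : nat, I (f ^+ k).

Definition same_ideal (K : fieldType) (n : nat) (I J : {mpoly K[n]} -> Prop)
  : Prop := forall f, I f <-> J f.

(* bar(I_A) <= k : there are t <= k binomials in I_A whose radical is I_A
   (bar is the least such t). *)
Definition bar_le (K : fieldType) (m n : nat) (A : 'M[int]_(m, n)) (k : nat)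
  : Prop :=
  exists t : nat, (t <= k)%N /\
    exists B : 'I_t -> {mpoly K[n]},
      (forall i, is_binomial (B i) /\ toric_ideal A (B i)) /\
      same_ideal (toric_ideal A) (radical (ideal_gen B)).

Definition radical_splittable (K : fieldType) (m n : nat) (A : 'M[int]_(m, n))
  : Prop :=
  exists (m1 m2 : nat) (A1 : 'M[int]_(m1, n)) (A2 : 'M[int]_(m2, n)),
    pointed_conf A1 /\ pointed_conf A2 /\
    same_ideal (toric_ideal A)
      (radical (ideal_sum (@toric_ideal K m1 n A1) (@toric_ideal K m2 n A2))) /\
    ~ same_ideal (@toric_ideal K m1 n A1) (toric_ideal A) /\
    ~ same_ideal (@toric_ideal K m2 n A2) (toric_ideal A).

(* Main.v *)
Set Warnings "-notation-overridden,-ambiguous-paths,-notation-incompatible-prefix".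
Require Import Defs.
From mathcomp Require Import all_boot all_order all_algebra.
From mathcomp Require Import mpoly.
From mathcomp Require Import zify.
Set Implicit Arguments. Unset Strict Implicit. Unset Printing Implicit Defensive.
Import Order.TTheory GRing.Theory Num.Theory.
Local Open Scope ring_scope.

Section Toric.
Variables (K : fieldType) (n : nat).
Implicit Types (f g : {mpoly K[n]}).

Definition am m (A : 'M[int]_(m, n)) (c : 'X_{1..n}) := Amul A (fun i => c i).

Lemma amD m (A : 'M[int]_(m, n)) c d : am A (c + d)%MM = am A c + am A d.
Proof.
apply/ffunP => j; rewrite !ffunE -big_split; apply: eq_bigr => i _.
by rewrite mnmDE PoszD mulrDr.
Qed.

Definition LL (G : 'X_{1..n} -> K) f := \sum_(c <- msupp f) f@_c * G c.

Lemma tiE m (A : 'M[int]_(m, n)) f b :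
  toric_image A f b = LL (fun c => (am A c == b)%:R) f.
Proof.
rewrite /toric_image /LL big_mkcond /=; apply: eq_bigr => c _.
by rewrite /am; case: eqP => _; rewrite ?mulr1 ?mulr0.
Qed.

Lemma sum_supp G s f : uniq s -> {subset msupp f <= s} ->
  \sum_(c <- s) f@_c * G c = LL G f.
Proof.
move=> us sub; rewrite (bigID (fun c => c \in msupp f)) /=.
rewrite [X in _ + X]big1 ?addr0; last by move=> c /memN_msupp_eq0 ->; rewrite mul0r.
rewrite -big_filter /LL; apply: perm_big; apply: uniq_perm.
- exact: filter_uniq.
- exact: msupp_uniq.
move=> x; rewrite mem_filter; case: (boolP (x \in msupp f)) => h //=.
by rewrite (sub _ h).
Qed.

Lemma eq_LL G1 G2 f : G1 =1 G2 -> LL G1 f = LL G2 f.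
Proof. by move=> h; apply: eq_bigr => c _; rewrite h. Qed.

Lemma LL_add G f g : LL G (f + g) = LL G f + LL G g.
Proof.
set s := undup (msupp f ++ msupp g).
have us : uniq s by exact: undup_uniq.
have s1 : {subset msupp f <= s} by move=> x hx; rewrite mem_undup mem_cat hx.
have s2 : {subset msupp g <= s} by move=> x hx; rewrite mem_undup mem_cat hx orbT.
have s3 : {subset msupp (f + g) <= s} by move=> x /msuppD_le; rewrite mem_undup.
rewrite -(sum_supp G us s1) -(sum_supp G us s2) -(sum_supp G us s3) -big_split.
by apply: eq_bigr => c _; rewrite mcoeffD mulrDl.
Qed.

Lemma LL_0 G : LL G 0 = 0.
Proof. by rewrite /LL msupp0 big_nil. Qed.

Lemma LL_scale G a f : LL G (a *: f) = a * LL G f.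
Proof.
rewrite -(@sum_supp G (msupp f) (a *: f)) ?msupp_uniq //; last exact: msuppZ_le.
rewrite /LL mulr_sumr; apply: eq_bigr => c _; by rewrite mcoeffZ mulrA.
Qed.

Lemma LL_X G e : LL G 'X_[e] = G e.
Proof. by rewrite /LL msuppX big_seq1 mcoeffX eqxx mul1r. Qed.

Lemma LL_sum G (I : Type) (r : seq I) (P : pred I) (F : I -> {mpoly K[n]}) :
  LL G (\sum_(i <- r | P i) F i) = \sum_(i <- r | P i) LL G (F i).
Proof. exact: (big_morph _ (LL_add G) (LL_0 G)). Qed.

Lemma LL_XM G c f : LL G ('X_[c] * f) = LL (fun d => G (c + d)%MM) f.
Proof.
rewrite {1}(mpolyE f) mulr_sumr LL_sum; apply: eq_bigr => d _.
by rewrite -scalerAr LL_scale -mpolyXD LL_X.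
Qed.

Lemma LL_M G g f : LL G (g * f) = \sum_(c <- msupp g) g@_c * LL (fun d => G (c + d)%MM) f.
Proof.
rewrite {1}(mpolyE g) mulr_suml LL_sum; apply: eq_bigr => c _.
by rewrite -scalerAl LL_scale LL_XM.
Qed.

Lemma toric_add m (A : 'M[int]_(m, n)) f g :
  toric_ideal A f -> toric_ideal A g -> toric_ideal A (f + g).
Proof. by move=> hf hg b; rewrite tiE LL_add -!tiE hf hg addr0. Qed.

Lemma toric_0 m (A : 'M[int]_(m, n)) : toric_ideal A (0 : {mpoly K[n]}).
Proof. by move=> b; rewrite tiE LL_0. Qed.

Lemma toric_mul m (A : 'M[int]_(m, n)) g f :
  toric_ideal A f -> toric_ideal A (g * f).
Proof.
move=> hf b; rewrite tiE LL_M big1 // => c _.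
have -> : LL (fun d => (am A (c + d)%MM == b)%:R) f = toric_image A f (b - am A c).
  rewrite tiE; apply: eq_LL => d; rewrite amD.
  by rewrite (eq_sym (am A d)) subr_eq (addrC (am A d)) eq_sym.
by rewrite hf mulr0.
Qed.

Lemma toric_sum m (A : 'M[int]_(m, n)) (I : Type) (r : seq I) (P : pred I) F :
  (forall i, P i -> toric_ideal A (F i : {mpoly K[n]})) -> toric_ideal A (\sum_(i <- r | P i) F i : {mpoly K[n]}).
Proof.
move=> h; elim/big_ind: _ => //; [exact: toric_0 | exact: toric_add].
Qed.


Lemma LL_sub G f g : LL G (f - g) = LL G f - LL G g.
Proof. by rewrite LL_add -scaleN1r LL_scale mulN1r. Qed.

Lemma ti_binom m (A : 'M[int]_(m, n)) u v b :
  toric_image A ('X_[u] - 'X_[v] : {mpoly K[n]}) b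
  = (am A u == b)%:R - (am A v == b)%:R.
Proof. by rewrite tiE LL_sub !LL_X. Qed.

Lemma binomP m (A : 'M[int]_(m, n)) u v :
  toric_ideal A ('X_[u] - 'X_[v] : {mpoly K[n]}) <-> am A u = am A v.
Proof.
split=> [h|e b]; last by rewrite ti_binom e subrr.
have := h (am A u); rewrite ti_binom eqxx.
case: eqP => // _; rewrite subr0 => /eqP; by rewrite oner_eq0.
Qed.

Lemma toric_sub m1 m2 (A1 : 'M[int]_(m1, n)) (A2 : 'M[int]_(m2, n)) f :
  (forall c d, am A1 c = am A1 d -> am A2 c = am A2 d) ->
  toric_ideal A1 f -> toric_ideal A2 f.
Proof.
move=> H hf b; rewrite tiE /LL.
set s := msupp f; set s' := undup (map (am A1) s).
transitivity (\sum_(c <- s) \sum_(y <- s') f@_c * (am A2 c == b)%:R * (am A1 c == y)%:R).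
  apply: eq_big_seq => c cs; rewrite -mulr_sumr.
  suff -> : \sum_(y <- s') (am A1 c == y)%:R = 1 :> K by rewrite mulr1.
  rewrite (bigD1_seq (am A1 c)) /= ?undup_uniq ?mem_undup ?map_f // eqxx.
  by rewrite big1 ?addr0 // => y; rewrite eq_sym => /negbTE ->.
rewrite exchange_big big_seq big1 // => y; rewrite mem_undup => /mapP [c0 c0s ->].
transitivity ((am A2 c0 == b)%:R * toric_image A1 f (am A1 c0)); last by rewrite hf mulr0.
rewrite tiE /LL mulr_sumr; apply: eq_bigr => c _.
case: (eqVneq (am A1 c) (am A1 c0)) => [e|ne]; last by rewrite !mulr0.
by rewrite (H _ _ e) !mulr1 mulrC.
Qed.

End Toric.
Lemma col_mul' (R : pzRingType) m n p j (A : 'M[R]_(m, n)) (B : 'M[R]_(n, p)) :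
  col j (A *m B) = A *m col j B.
Proof. by rewrite !colE mulmxA. Qed.

Lemma keyLA n p k (Aq : 'M[rat]_(p, n)) (W : 'M[rat]_(n, k)) :
  (k + \rank Aq < n)%N ->
  exists c : 'rV_n, c *m W = 0 /\ exists z : 'cV_n, Aq *m z = 0 /\ c *m z != 0.
Proof.
move=> hk.
have nsub : ~~ (kermx W <= Aq)%MS.
  apply/negP => /mxrankS; rewrite mxrank_ker.
  have := rank_leq_col W; lia.
have [i hi] : exists i, ~~ (row i (kermx W) <= Aq)%MS.
  apply/existsP; rewrite -negb_forall; apply: contra nsub => /forallP h.
  by apply/row_subP => i; exact: h.
exists (row i (kermx W)); split; first by rewrite -row_mul mulmx_ker row0.
move: hi; rewrite submxE => hne.
have [j hj] : exists j, (row i (kermx W) *m cokermx Aq) 0 j != 0.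
  apply/existsP; rewrite -negb_forall; apply: contra hne => /forallP h.
  apply/eqP/matrixP => a b; rewrite ord1 [RHS]mxE; exact/eqP/h.
exists (col j (cokermx Aq)); split; first by rewrite -col_mul' mulmx_coker col0.
apply: contraNneq hj => e.
move: e; rewrite -col_mul' => /matrixP /(_ 0 0); by rewrite !mxE => /eqP.
Qed.

Definition cv n (u : 'X_{1..n}) : 'cV[rat]_n := \col_i ((u i)%:R).

Lemma am_eqP n m (A : 'M[int]_(m, n)) u v :
  am A u = am A v <-> map_mx intr A *m (cv u - cv v) = 0 :> 'cV[rat]_m.
Proof.
have key j : (map_mx intr A *m (cv u - cv v)) j 0 = ((am A u j - am A v j)%:~R : rat).
  rewrite !mxE /am !ffunE -sumrB rmorph_sum; apply: eq_bigr => i _.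
  by rewrite !mxE -mulrBr rmorphM /= rmorphB /= !pmulrn.
split=> [e|h].
  by apply/matrixP => j k; rewrite ord1 key e subrr mxE.
apply/ffunP => j; apply/eqP; rewrite -subr_eq0.
have := congr1 (fun M : 'cV[rat]_m => M j 0) h; rewrite /= key mxE => /eqP.
by rewrite intr_eq0.
Qed.

Lemma scale_int p q (M : 'M[rat]_(p, q)) :
  exists d : int, d != 0 /\ exists Mi : 'M[int]_(p, q), map_mx intr Mi = d%:~R *: M.
Proof.
pose d := \prod_(ij : 'I_p * 'I_q) denq (M ij.1 ij.2).
exists d; split.
  by rewrite prodf_seq_neq0; apply/allP => ij _; rewrite denq_neq0.
exists (\matrix_(i, j) (numq (M i j) * \prod_(ij : 'I_p * 'I_q | ij != (i, j)) denq (M ij.1 ij.2))).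
apply/matrixP => i j; rewrite !mxE (intrM rat) numqE /d [in RHS](bigD1 (i, j)) //= rmorphM /=.
by rewrite [RHS]mulrC mulrA.
Qed.

Lemma build m n (A : 'M[int]_(m, n)) k (W : 'M[rat]_(n, k)) :
  pointed_conf A -> (k + \rank (map_mx intr A : 'M[rat]_(m, n)) < n)%N ->
  exists A1 : 'M[int]_(m + 1, n),
    [/\ pointed_conf A1,
        (forall c d, am A1 c = am A1 d -> am A c = am A d),
        (forall c d i, am A c = am A d -> cv c - cv d = col i W -> am A1 c = am A1 d) &
        exists c d, am A c = am A d /\ am A1 c <> am A1 d].
Proof.
move=> hA hk.
set Aq := (map_mx intr A : 'M[rat]_(m, n)).
have [c [cW [z [Az cz]]]] := @keyLA n m k Aq W hk.
have [d [d0 [Ci hCi]]] := scale_int c.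
have [e [e0 [zi hzi]]] := scale_int z.
exists (col_mx A Ci).
have amL x j : am (col_mx A Ci) x (lshift 1 j) = am A x j.
  by rewrite /am !ffunE; apply: eq_bigr => i _; rewrite col_mxEu.
have mapA1 : map_mx intr (col_mx A Ci) = col_mx Aq (d%:~R *: c).
  by rewrite map_col_mx hCi.
split.
- move=> u hu i; apply: hA => j; rewrite -[RHS](hu (lshift 1 j)).
  by apply: eq_bigr => l _; rewrite col_mxEu.
- move=> x y e1; apply/ffunP => j; by rewrite -!amL e1.
- move=> x y i e1 e2; apply/am_eqP; rewrite mapA1 mul_col_mx.
  move/am_eqP: e1 => ->; rewrite e2 -scalemxAl -col_mul' cW col0 scaler0.
  exact: col_mx0.
pose f (b : bool) := [multinom (if (0 <= zi j ord0)%R == b then `|zi j ord0|%N else 0%N) | j < n].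
have hf : cv (f true) - cv (f false) = e%:~R *: z.
  rewrite -hzi; apply/matrixP => a b; rewrite [b]ord1 !mxE !mnmE.
  case: (lerP 0 (zi a 0)) => h /=.
    by rewrite subr0 natr_absz ger0_norm.
  by rewrite sub0r natr_absz ltr0_norm // rmorphN opprK.
exists (f true), (f false); split.
  by apply/am_eqP; rewrite hf -scalemxAr Az scaler0.
move/am_eqP; rewrite mapA1 mul_col_mx hf => /eqP; rewrite col_mx_eq0 => /andP [_].
rewrite -scalemxAr -scalemxAl !scaler_eq0 !intr_eq0 (negbTE d0) (negbTE e0) /=.
by rewrite (negbTE cz).
Qed.

Local Close Scope ring_scope.

Theorem theorem2p5 (K : fieldType) (m n : nat) (A : 'M[int]_(m, n)) :
  pointed_conf A ->
  (3 <= toric_height A)%N ->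
  bar_le K A (2 * toric_height A - 2) ->
  radical_splittable K A.
Proof.
Local Open Scope ring_scope.
move=> hA hr [t [ht [B [hB hrad]]]].
set Aq := (map_mx intr A : 'M[rat]_(m, n)).
have hrE : toric_height A = (n - \rank Aq)%N by [].
set k := (toric_height A).-1.
have hk : (k + \rank Aq < n)%N by rewrite /k hrE; rewrite hrE in hr; lia.
have hkt : (t <= k + k)%N by rewrite /k; lia.
have : forall j : 'I_t, exists uv : 'X_{1..n} * 'X_{1..n},
    B j = 'X_[uv.1] - 'X_[uv.2].
  move=> j; have [[u [v e]] _] := hB j; by exists (u, v).
case/fin_all_exists => uv huv.
have hAB j : am A (uv j).1 = am A (uv j).2.
  by apply/(@binomP K); rewrite -huv; case: (hB j).
pose wv (j : 'I_t) := cv (uv j).1 - cv (uv j).2.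
pose wn (j : nat) := \sum_(jj : 'I_t | val jj == j) wv jj.
have wnE (j : 'I_t) : wn j = wv j.
  by rewrite /wn (big_pred1 j) // => jj /=; rewrite val_eqE.
pose W1 : 'M[rat]_(n, k) := \matrix_(l, i) (wn i l 0).
pose W2 : 'M[rat]_(n, k) := \matrix_(l, i) (wn (i + k)%N l 0).
have [A1 [p1 s1 b1 [c1 [d1 [e1 ne1]]]]] := build W1 hA hk.
have [A2 [p2 s2 b2 [c2 [d2 [e2 ne2]]]]] := build W2 hA hk.
have inI1 (j : 'I_t) : (j < k)%N -> @toric_ideal K _ _ A1 (B j).
  move=> jk; rewrite huv; apply/binomP; apply: (b1 _ _ (Ordinal jk)) => //.
  by apply/matrixP => l z; rewrite !mxE /= (wnE j) /wv !mxE.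
have inI2 (j : 'I_t) : ~~ (j < k)%N -> @toric_ideal K _ _ A2 (B j).
  rewrite -leqNgt => jk; have jk' : (j - k < k)%N by have := ltn_ord j; lia.
  rewrite huv; apply/binomP; apply: (b2 _ _ (Ordinal jk')) => //.
  by apply/matrixP => l z; rewrite !mxE /= subnK // (wnE j) /wv !mxE.
exists (m + 1)%N, (m + 1)%N, A1, A2; split => //; split => //; split.
- move=> f; split.
  + move=> /hrad [kk [g e]]; exists kk.
    exists (\sum_(j < t | (j < k)%N) g j * B j), (\sum_(j < t | ~~ (j < k)%N) g j * B j).
    split; first by apply: toric_sum => j jk; apply: toric_mul; exact: inI1.
    split; first by apply: toric_sum => j jk; apply: toric_mul; exact: inI2.
    by rewrite e (bigID (fun j : 'I_t => (j < k)%N)).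
  + move=> [kk [g [h [hg [hh e]]]]].
    have : toric_ideal A (f ^+ kk).
      by rewrite e; apply: toric_add; [exact: toric_sub s1 hg | exact: toric_sub s2 hh].
    move=> /hrad [kk2 hk2]; apply/hrad; exists (kk * kk2)%N; by rewrite exprM.
split.
- move=> h; apply: ne1; apply/(@binomP K); apply/h; exact/binomP.
- move=> h; apply: ne2; apply/(@binomP K); apply/h; exact/binomP.
Qed.
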